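(* For every integer $n\geq 4$, let $S_n$ be the star with $n$ vertices (one center adjacent to $n-1$ leaves). Then $\chi_L(S_n\odot\overline{K_1})=\lceil\sqrt{n}\rceil+1$.
   Context: All graphs are finite and simple. A $k$-coloring of a connected graph $G$ is a map $c:V(G)\to\{1,\dots,k\}$ with $c(u)\neq c(v)$ for adjacent $u,v$; it induces the partition $\Pi=\{C_1,\dots,C_k\}$ into color classes $C_i=c^{-1}(i)$. The color code of $v$ is $c_\Pi(v)=(d(v,C_1),\dots,d(v,C_k))$ with $d(v,C_i)=\min\{d(v,x): x\in C_i\}$ (graph distance). $c$ is a locating coloring if distinct vertices have distinct color codes; the locating-chromatic number $\chi_L(G)$ is the least $k$ for which a locating $k$-coloring exists. The corona product $G\odot H$ of a graph $G$ with vertex set $\{a_1,\dots,a_n\}$ and a graph $H$ is obtained from one copy of $G$ and $n$ disjoint copies of $H$ by joining $a_i$ to every vertex of the $i$-th copy of $H$. Thus $S_n\odot\overline{K_1}$ is the tree obtained from $S_n$ by attaching one new pendant vertex to each of its $n$ vertices. *)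

(* Defs.v *)
From mathcomp Require Import all_boot.
Set Implicit Arguments. Unset Strict Implicit. Unset Printing Implicit Defensive.

Definition simple_graph (T : finType) (e : rel T) : Prop :=
  irreflexive e /\ symmetric e.

Fixpoint reach (T : finType) (e : rel T) (k : nat) (x : T) : {set T} :=
  match k with
  | 0 => [set x]
  | k'.+1 => reach e k' x :|: [set y | [exists z in reach e k' x, e z y]]
  end.

(* Graph distance: the least k such that y is within k steps of x
   (for a connected graph this is < #|T|, so the search over 0..#|T|-1
   finds it). *)
Definition gdist (T : finType) (e : rel T) (x y : T) : nat :=
  find (fun k => y \in reach e k x) (iota 0 #|T|).

(* d(v, C) = min_{x in C} d(v, x); (the default #|T| only matters for an
   empty class, where it is a constant independent of v). *)
Definition dist_set (T : finType) (e : rel T) (v : T) (C : {set T}) : nat :=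
  \big[minn/#|T|]_(x in C) gdist e v x.

Definition color_class (T : finType) (k : nat) (c : T -> 'I_k) (i : 'I_k)
  : {set T} := [set x | c x == i].

Definition color_code (T : finType) (e : rel T) (k : nat) (c : T -> 'I_k)
  (v : T) : 'I_k -> nat := fun i => dist_set e v (color_class c i).

Definition proper_coloring (T : finType) (e : rel T) (k : nat)
  (c : T -> 'I_k) : Prop := forall u v, e u v -> c u != c v.

Definition locating_coloring (T : finType) (e : rel T) (k : nat)
  (c : T -> 'I_k) : Prop :=
  proper_coloring e c /\
  (forall u v, (forall i, color_code e c u i = color_code e c v i) -> u = v).

Definition is_locating_chromatic_number (T : finType) (e : rel T) (m : nat)
  : Prop :=
  (exists c : T -> 'I_m, locating_coloring e c) /\
  (forall k (c : T -> 'I_k), locating_coloring e c -> m <= k).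

Definition star_rel (n : nat) : rel 'I_n :=
  fun i j => (i != j) && ((val i == 0) || (val j == 0)).

(* Corona G (.) H: vertex (a, None) is vertex a of G, (a, Some w) is
   vertex w of the copy of H attached to a. *)
Definition corona (V W : finType) (eG : rel V) (eH : rel W)
  : rel (V * option W) :=
  fun x y =>
    match x, y with
    | (a, None), (b, None) => eG a b
    | (a, Some w), (b, Some w') => (a == b) && eH w w'
    | (a, None), (b, Some _) => a == b
    | (a, Some _), (b, None) => a == b
    end.

Definition K1bar : rel unit := fun _ _ => false.

Definition star_corona_K1 (n : nat) : rel ('I_n * option unit) :=
  corona (@star_rel n) K1bar.

(* Main.v *)
Require Import Defs.
From mathcomp Require Import all_boot zify.
Set Implicit Arguments. Unset Strict Implicit. Unset Printing Implicit Defensive.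

Definition hh (n : nat) (x : 'I_n * option unit) : nat :=
  (val x.1 != 0) + (x.2 != None).
Definition DD (n : nat) (x y : 'I_n * option unit) : nat :=
  if val x.1 == val y.1 then (if x.2 == y.2 then 0 else 1) else hh x + hh y.

Lemma edgeE n (a b : 'I_n) (o p : option unit) :
  star_corona_K1 (a, o) (b, p) =
  match o, p with
  | None, None => (val a != val b) && ((val a == 0) || (val b == 0))
  | Some _, Some _ => false
  | _, _ => val a == val b
  end.
Proof.
by case: o p => [[]|] [[]|] //=; rewrite /star_corona_K1 /corona /star_rel /K1bar ?andbF //= val_eqE.
Qed.

Ltac brute := rewrite /DD /hh; simpl in *; repeat (case: ifP => /=); try (intros; simpl in *; lia).

Lemma DD_edge n (x y z : 'I_n * option unit) :
  star_corona_K1 z y -> DD x y <= (DD x z).+1.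
Proof.
case: x y z => [xa xo] [ya yo] [za zo]; rewrite edgeE.
case: xo yo zo => [[]|] [[]|] [[]|] //=; brute.
Qed.

Lemma DD_pred n (x y : 'I_n * option unit) :
  x != y -> exists z, star_corona_K1 z y /\ DD x z < DD x y.
Proof.
case: x y => [xa xo] [ya yo] Hne.
have Hne' : (val xa != val ya) || (xo != yo).
  apply: contraR Hne; rewrite negb_or !negbK => /andP [/eqP H1 /eqP H2].
  by rewrite (val_inj H1) H2.
clear Hne.
case: (eqVneq (val xa) (val ya)) => Hxy.
  exists (xa, xo); split.
    rewrite edgeE; move: Hne'; rewrite Hxy eqxx /=.
    by case: xo yo => [[]|] [[]|] //=; rewrite eqxx.
  rewrite /DD /= eqxx Hxy eqxx; move: Hne'; rewrite Hxy eqxx /= => /negbTE ->; done.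
clear Hne'. case: yo => [[]|].
  exists (ya, None); split; first by rewrite edgeE.
  move: Hxy; brute.
case: (eqVneq (val ya) 0) => Hy0.
  exists (xa, None); split.
    rewrite edgeE; move: Hxy; rewrite Hy0 => Hxy; rewrite Hxy /=; simpl in *; lia.
  move: Hxy; rewrite Hy0; case: xo => [[]|]; brute.
have n0 : 0 < n by case: xa Hxy => m Hm; lia.
exists (Ordinal n0, None); split.
  rewrite edgeE; simpl in *; lia.
move: Hxy Hy0; case: xo => [[]|]; brute.
Qed.

Lemma DD0 n (x y : 'I_n * option unit) : (DD x y == 0) = (x == y).
Proof.
case: x y => [xa xo] [ya yo].
rewrite -pair_eqE /= -val_eqE /DD /hh /=.
case: (eqVneq (val xa) (val ya)) => H /=.
  by case: (xo == yo).
apply/negbTE; case: xo yo => [[]|] [[]|] /=; simpl in *; lia.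
Qed.

Lemma reachE n k (x y : 'I_n * option unit) :
  (y \in reach (@star_corona_K1 n) k x) = (DD x y <= k).
Proof.
elim: k y => [|k IH] y /=.
  by rewrite in_set1 leqn0 DD0 eq_sym.
rewrite in_setU in_set IH.
apply/idP/idP.
  case/orP => [H|]; first by apply: leq_trans H _.
  case/existsP => z /andP [Hz Hzy].
  rewrite IH in Hz.
  apply: leq_trans (DD_edge x Hzy) _; by [].
move=> H.
case: (leqP (DD x y) k) => [//|Hlt].
apply/orP; right.
have Hne : x != y by rewrite -DD0; apply/eqP => E; rewrite E in Hlt.
have [z [Hzy Hz]] := DD_pred Hne.
apply/existsP; exists z; rewrite IH Hzy andbT.
lia.
Qed.

Lemma find_iota_leq m N i : i <= m < i + N ->
  find (fun k => m <= k) (iota i N) = m - i.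
Proof.
elim: N i => [|N IH] i /=; first by lia.
move=> H; case: ifP => Hmi; first by lia.
rewrite IH; lia.
Qed.

Lemma DD_le4 n (x y : 'I_n * option unit) : DD x y <= 4.
Proof. brute. Qed.

Lemma cardT n : #|{: 'I_n * option unit}| = n * 2.
Proof. by rewrite card_prod card_ord card_option card_unit. Qed.

Lemma gdistE n (x y : 'I_n * option unit) : 2 < n ->
  gdist (@star_corona_K1 n) x y = DD x y.
Proof.
move=> Hn; rewrite /gdist.
rewrite (eq_find (a2 := fun k => DD x y <= k)); last by move=> k; rewrite reachE.
rewrite find_iota_leq ?subn0 //.
have := DD_le4 x y; rewrite cardT; lia.
Qed.

Lemma dist_setE n (v : 'I_n * option unit) (C : {set 'I_n * option unit}) m :
  2 < n ->
  (dist_set (@star_corona_K1 n) v C <= m) =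
  (n * 2 <= m) || [exists y in C, DD v y <= m].
Proof.
move=> Hn; rewrite /dist_set cardT.
apply/idP/idP.
  apply: (big_ind (fun r => r <= m -> _)).
  - by move=> ->.
  - move=> a b Ha Hb; rewrite geq_min => /orP [/Ha|/Hb] //.
  - move=> i iC; rewrite gdistE // => H.
    by apply/orP; right; apply/existsP; exists i; rewrite iC H.
case/orP => [H|].
  apply: leq_trans H.
  apply: (big_ind (fun r => r <= n * 2)) => //.
  by move=> a b Ha Hb; rewrite geq_min Ha.
  move=> i _; rewrite gdistE //; have := DD_le4 v i; lia.
case/existsP => y /andP [yC Hy].
rewrite -big_filter.
have : y \in [seq i <- index_enum ('I_n * option unit)%type | i \in C].
  by rewrite mem_filter yC mem_index_enum.
elim: [seq _ <- _ | _] => [//|z s IHs].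
rewrite inE big_cons geq_min => /orP [/eqP <-|/IHs ->]; last by rewrite orbT.
by rewrite gdistE // Hy.
Qed.

Lemma dist_set_mono n (u v : 'I_n * option unit) (C : {set 'I_n * option unit}) : 2 < n ->
  (forall y, y \in C -> exists2 y', y' \in C & DD v y' <= DD u y) ->
  dist_set (@star_corona_K1 n) v C <= dist_set (@star_corona_K1 n) u C.
Proof.
move=> Hn H.
have := leqnn (dist_set (@star_corona_K1 n) u C).
rewrite {1}dist_setE // => /orP [Hle|/existsP [y /andP [yC Hy]]].
  by rewrite dist_setE // Hle.
have [y' y'C Hy'] := H y yC.
rewrite dist_setE //; apply/orP; right; apply/existsP; exists y'.
by rewrite y'C (leq_trans Hy').
Qed.

Lemma code_eq n k (c : 'I_n * option unit -> 'I_k) u v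
  (phi psi : 'I_n * option unit -> 'I_n * option unit) : 2 < n ->
  (forall y, c (phi y) = c y) -> (forall y, DD v (phi y) <= DD u y) ->
  (forall y, c (psi y) = c y) -> (forall y, DD u (psi y) <= DD v y) ->
  forall i, color_code (@star_corona_K1 n) c u i = color_code (@star_corona_K1 n) c v i.
Proof.
move=> Hn Hc1 Hd1 Hc2 Hd2 i; rewrite /color_code; apply/eqP; rewrite eqn_leq.
apply/andP; split; apply: dist_set_mono => // y; rewrite /color_class inE => Hy.
  by exists (psi y); rewrite // inE Hc2.
by exists (phi y); rewrite // inE Hc1.
Qed.

Definition swapb n (i j : 'I_n) (y : 'I_n * option unit) : 'I_n * option unit :=
  if val y.1 == val i then (j, y.2) else if val y.1 == val j then (i, y.2) else y.

Lemma swapb_DD n (i j : 'I_n) y : val i != 0 -> val j != 0 ->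
  DD (j, None) (swapb i j y) <= DD (i, None) y.
Proof.
case: y => ya yo; rewrite /swapb /= => Hi Hj.
case: yo => [[]|]; brute.
Qed.

Lemma swapb_col n k (c : 'I_n * option unit -> 'I_k) (i j : 'I_n) y :
  (forall o, c (i, o) = c (j, o)) -> c (swapb i j y) = c y.
Proof.
case: y => ya yo H; rewrite /swapb /=.
case: eqP => [/val_inj E|_]; first by rewrite E H.
by case: eqP => [/val_inj E|_] //; rewrite E H.
Qed.

Definition phiL n (c0 i : 'I_n) (y : 'I_n * option unit) : 'I_n * option unit :=
  if val y.1 == val i then (if y.2 is Some _ then (c0, None) else (c0, Some tt))
  else if val y.1 == 0 then (if y.2 is Some _ then (i, None) else (c0, None))
  else y.

Definition psiL n (c0 i : 'I_n) (y : 'I_n * option unit) : 'I_n * option unit :=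
  if (val y.1 == val i) && (y.2 == None) then (c0, Some tt)
  else if (val y.1 == 0) && (y.2 != None) then (i, None)
  else y.

Lemma phiL_DD n (c0 i : 'I_n) y : val c0 = 0 -> val i != 0 ->
  DD (c0, Some tt) (phiL c0 i y) <= DD (i, None) y.
Proof.
case: y => ya yo; rewrite /phiL /= => H0 Hi.
case: yo => [[]|]; brute.
Qed.

Lemma psiL_DD n (c0 i : 'I_n) y : val c0 = 0 -> val i != 0 ->
  DD (i, None) (psiL c0 i y) <= DD (c0, Some tt) y.
Proof.
case: y => ya yo; rewrite /psiL /= => H0 Hi.
case: yo => [[]|]; brute.
Qed.

Lemma phiL_col n k (c : 'I_n * option unit -> 'I_k) (c0 i : 'I_n) y :
  val c0 = 0 -> c (i, None) = c (c0, Some tt) -> c (i, Some tt) = c (c0, None) ->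
  c (phiL c0 i y) = c y.
Proof.
case: y => ya [[]|] H0 H1 H2; rewrite /phiL /=.
- case: eqP => [/val_inj E|_]; first by rewrite E H2.
  case: eqP => [E|_] //; rewrite H1; congr c; congr pair; apply: val_inj; simpl in *; lia.
- case: eqP => [/val_inj E|_]; first by rewrite E H1.
  case: eqP => [E|_] //; congr c; congr pair; apply: val_inj; simpl in *; lia.
Qed.

Lemma psiL_col n k (c : 'I_n * option unit -> 'I_k) (c0 i : 'I_n) y :
  val c0 = 0 -> c (i, None) = c (c0, Some tt) -> 
  c (psiL c0 i y) = c y.
Proof.
case: y => ya [[]|] H0 H1; rewrite /psiL /= ?andbT ?andbF /=.
- case: eqP => [E|_] //; rewrite H1; congr c; congr pair; apply: val_inj; simpl in *; lia.
- case: eqP => [/val_inj E|_] //; by rewrite E H1.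
Qed.

Lemma lower n k (c : 'I_n * option unit -> 'I_k) : 3 < n ->
  locating_coloring (@star_corona_K1 n) c -> n <= k.-1 * k.-1.
Proof.
move=> Hn [Hprop Hloc].
have n0 : 0 < n by lia.
pose c0 := Ordinal n0.
have Hc0 : val c0 = 0 by [].
pose x := c (c0, None); pose bc := c (c0, Some tt).
pose f := fun i : 'I_n => (c (i, None), c (i, Some tt)).
pose A := [set i : 'I_n | val i != 0].
pose B' := [set p : 'I_k * 'I_k | (p.1 != x) && (p.2 != p.1)].
pose B := B' :\ (bc, x).
have Hn2 : 2 < n by lia.
have inj : {in A &, injective f}.
  move=> i j; rewrite !inE => Hi Hj [E1 E2].
  have Hc : forall o, c (i, o) = c (j, o) by case => [[]|].
  have Hc' : forall o, c (j, o) = c (i, o) by move=> o; rewrite Hc.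
  have := Hloc (i, None) (j, None)
    (@code_eq n k c (i, None) (j, None) (swapb i j) (swapb j i) Hn2
      (fun y => swapb_col y Hc) (fun y => swapb_DD y Hi Hj)
      (fun y => swapb_col y Hc') (fun y => swapb_DD y Hj Hi)).
  by case.
have sub : f @: A \subset B.
  apply/subsetP => p /imsetP [i iA ->]; move: iA; rewrite !inE => Hi.
  have E1 : c (i, None) != c (c0, None).
    by rewrite eq_sym; apply: (Hprop); rewrite edgeE /= andbT eq_sym.
  have E2 : c (i, Some tt) != c (i, None).
    by rewrite eq_sym; apply: (Hprop); rewrite edgeE.
  rewrite /f /x /= E1 E2 !andbT.
  apply/negP => /eqP [F1 F2].
  have := Hloc (i, None) (c0, Some tt)
    (@code_eq n k c (i, None) (c0, Some tt) (phiL c0 i) (psiL c0 i) Hn2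
      (fun y => phiL_col y Hc0 F1 F2) (fun y => phiL_DD y Hc0 Hi)
      (fun y => psiL_col y Hc0 F1) (fun y => psiL_DD y Hc0 Hi)).
  by [].
have cardA : #|A| = n.-1.
  have -> : A = [set~ c0] by apply/setP => i; rewrite !inE -val_eqE.
  by rewrite cardsC1 card_ord.
have cardB' : #|B'| = k.-1 * k.-1.
  rewrite -sum1_card.
  rewrite (eq_bigl (fun p : 'I_k * 'I_k => (p.1 != x) && (p.2 != p.1))); last first.
    by move=> p; rewrite inE.
  rewrite -(pair_big_dep (fun a => a != x) (fun a b => b != a) (fun _ _ => 1)) /=.
  rewrite (eq_bigr (fun _ => k.-1)); last first.
    move=> a _; rewrite sum1_card cardC1 card_ord //.
  by rewrite sum_nat_const cardC1 card_ord.
have inB' : (bc, x) \in B'.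
  have : c (c0, None) != c (c0, Some tt) by apply: (Hprop); rewrite edgeE.
  by rewrite inE /= /x /bc => H; rewrite H eq_sym H.
have cardB : #|B| = k.-1 * k.-1 - 1.
  by have := cardsD1 (bc, x) B'; rewrite inB' cardB' /B; lia.
have := subset_leq_card sub.
rewrite card_in_imset // cardA cardB.
lia.
Qed.
Definition acol (s i : nat) : nat := (i.-1 %/ s).+1.
Definition bcol (s i : nat) : nat :=
  let r := i.-1 %% s in
  if r.+1 < acol s i then r.+1 else if r.+1 < s then r.+2 else 0.


Lemma acol_ge1 s i : 0 < acol s i.
Proof. by []. Qed.

Lemma acol_le n s i : 0 < i < n -> n <= s * s -> acol s i <= s.
Proof.
move=> Hi Hn; rewrite /acol.
have s0 : 0 < s by case: s Hn => //; lia.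
have : i.-1 %/ s < s by rewrite ltn_divLR //; lia.
lia.
Qed.

Lemma bcol_le s i : 0 < s -> bcol s i <= s.
Proof.
move=> s0; rewrite /bcol /=; have := ltn_pmod i.-1 s0.
move: (i.-1 %% s) (acol s i) => r q.
case: ifP => ?; first lia. case: ifP => ?; lia.
Qed.

Lemma bcol_neq s i : bcol s i != acol s i.
Proof.
rewrite /bcol /acol /=; move: (i.-1 %% s) (i.-1 %/ s) => r q.
case: ifP => ?; first lia. case: ifP => ?; lia.
Qed.

Lemma bcol0 s i : 0 < s -> bcol s i = 0 -> i.-1 %% s = s.-1.
Proof.
move=> s0; have := ltn_pmod i.-1 s0; rewrite /bcol /=.
move: (i.-1 %% s) (acol s i) => r q.
case: ifP => ?; first lia. case: ifP => ?; lia.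
Qed.

Lemma not_s0 n s i : 0 < i < n -> n <= s * s -> acol s i = s -> bcol s i = 0 -> False.
Proof.
move=> Hi Hn Ha Hb.
have s0 : 0 < s by case: s Hn Ha Hb => //; lia.
have Hr := bcol0 s0 Hb.
move: Ha; rewrite /acol => Hq.
have E := divn_eq i.-1 s.
have Hq' : i.-1 %/ s = s.-1 by lia.
rewrite Hq' Hr in E.
nia.
Qed.

Lemma acol_bcol_inj s i j : 0 < s -> 0 < i -> 0 < j ->
  acol s i = acol s j -> bcol s i = bcol s j -> i = j.
Proof.
move=> s0 Hi Hj Ha Hb.
have Hq : i.-1 %/ s = j.-1 %/ s by move: Ha; rewrite /acol; lia.
have Hr : i.-1 %% s = j.-1 %% s.
  move: Hb; rewrite /bcol /= Ha.
  have := ltn_pmod i.-1 s0; have := ltn_pmod j.-1 s0.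
  move: (i.-1 %% s) (j.-1 %% s) (acol s j) => ri rj q.
  repeat case: ifP; intros; lia.
have Ei := divn_eq i.-1 s; have Ej := divn_eq j.-1 s.
rewrite Hq Hr -Ej in Ei. lia.
Qed.

Arguments acol : simpl never.
Arguments bcol : simpl never.

Definition colv (s a : nat) (o : option unit) : nat :=
  if a == 0 then (if o is Some _ then s else 0)
  else (if o is Some _ then bcol s a else acol s a).

Definition ball1 n s (u : 'I_n * option unit) (j : nat) : Prop :=
  exists y : 'I_n * option unit, colv s (val y.1) y.2 = j /\ DD u y <= 1.

Lemma ball1_cases n (u y : 'I_n * option unit) : DD u y <= 1 ->
  (val y.1 = val u.1) \/ [&& y.2 == None, u.2 == None & (val y.1 == 0) || (val u.1 == 0)].
Proof.
case: u y => [ua uo] [ya yo]; case: uo yo => [[]|] [[]|]; brute.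
Qed.

Lemma ball_same n s (ua : 'I_n) o o' : ball1 s (ua, o) (colv s (val ua) o').
Proof.
exists (ua, o'); split => //; case: o o' => [[]|] [[]|]; brute.
Qed.

Lemma ball_same2 n s (ua : 'I_n) o o' j : colv s (val ua) o' = j -> ball1 s (ua, o) j.
Proof. by move=> <-; apply: ball_same. Qed.

Lemma ball_LC n s (ua : 'I_n) : val ua != 0 -> ball1 s (ua, None) 0.
Proof.
move=> H; have n0 : 0 < n by case: ua H => m Hm /=; lia.
exists (Ordinal n0, None); split => //; brute.
Qed.

Lemma ball_P n s (ua : 'I_n) j : val ua = 0 -> ball1 s (ua, Some tt) j -> j = s \/ j = 0.
Proof.
move=> H [[ya yo] [Hc /ball1_cases /= Hd]].
case: Hd => [E|]; last by case: yo Hc.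
move: Hc; rewrite /colv; simpl in *; rewrite E H eqxx; case: yo => [[]|]; lia.
Qed.

Lemma ball_L n s (ua : 'I_n) j : val ua != 0 -> ball1 s (ua, None) j ->
  j = acol s (val ua) \/ j = bcol s (val ua) \/ j = 0.
Proof.
move=> H [[ya yo] [Hc /ball1_cases /= Hd]].
case: Hd => [E|].
  move: Hc; rewrite /colv; simpl in *; rewrite E (negbTE H); case: yo => [[]|]; lia.
case: yo Hc => [[]|] //= Hc; rewrite (negbTE H) orbF => /eqP E.
by move: Hc; rewrite /colv; simpl in *; rewrite E eqxx; lia.
Qed.

Lemma ball_Q n s (ua : 'I_n) j : val ua != 0 -> ball1 s (ua, Some tt) j ->
  j = bcol s (val ua) \/ j = acol s (val ua).
Proof.
move=> H [[ya yo] [Hc /ball1_cases /= Hd]].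
case: Hd => [E|]; last by case: yo Hc.
move: Hc; rewrite /colv; simpl in *; rewrite E (negbTE H); case: yo => [[]|]; lia.
Qed.

Lemma key n s (u v : 'I_n * option unit) : n <= s * s -> 2 <= s ->
  colv s (val u.1) u.2 = colv s (val v.1) v.2 ->
  (forall j, j <= s -> (ball1 s u j <-> ball1 s v j)) -> u = v.
Proof.
case: u v => [ua uo] [va vo] /= Hn Hs Hc H1.
have s0 : 0 < s by lia.
have hA : forall x : 'I_n, val x != 0 ->
   [/\ 0 < acol s (val x), acol s (val x) <= s, bcol s (val x) <= s,
       bcol s (val x) != acol s (val x) &
       (acol s (val x) = s -> bcol s (val x) = 0 -> False)].
  move=> x Hx; have Hx' : 0 < val x < n by rewrite ltn_ord; lia.
  split; [by [] | exact: acol_le Hx' Hn | exact: bcol_le | exact: bcol_neq |].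
  exact: not_s0 Hx' Hn.
have inj : forall x y : 'I_n, val x != 0 -> val y != 0 ->
    acol s (val x) = acol s (val y) -> bcol s (val x) = bcol s (val y) -> x = y.
  move=> x y Hx Hy Ha Hb; apply: val_inj; apply: acol_bcol_inj Ha Hb => //; lia.
case: uo vo Hc H1 => [[]|] [[]|] Hc H1;
  case: (eqVneq (val ua) 0) => Ha; case: (eqVneq (val va) 0) => Hb;
  move: Hc; rewrite /colv ?Ha ?Hb ?(negbTE Ha) ?(negbTE Hb) /= => Hc.
- by congr pair; apply: val_inj; rewrite Ha Hb.
- have [Hb1 Hb2 Hb3 Hb4 Hb5] := hA _ Hb.
  have := (H1 0 (leq0n _)).1 (@ball_same2 _ s ua _ None _ ltac:(by rewrite /colv Ha)).
  move=> /(ball_Q Hb); simpl in *; lia.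
- have [Ha1 Ha2 Ha3 Ha4 Ha5] := hA _ Ha.
  have := (H1 0 (leq0n _)).2 (@ball_same2 _ s va _ None _ ltac:(by rewrite /colv Hb)).
  move=> /(ball_Q Ha); simpl in *; lia.
- have [Ha1 Ha2 Ha3 Ha4 Ha5] := hA _ Ha.
  have [Hb1 Hb2 Hb3 Hb4 Hb5] := hA _ Hb.
  have := (H1 _ Ha2).1 (@ball_same2 _ s ua _ None _ ltac:(by rewrite /colv (negbTE Ha))).
  move=> /(ball_Q Hb) [E|E]; first by simpl in *; lia.
  by rewrite (inj _ _ Ha Hb E Hc).
- simpl in *; lia.
- have [Hb1 Hb2 Hb3 Hb4 Hb5] := hA _ Hb.
  have := (H1 _ Hb3).2 (@ball_same2 _ s va _ (Some tt) _ ltac:(by rewrite /colv (negbTE Hb))).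
  move=> /(ball_P Ha) [E|E]; first by simpl in *; lia.
  by case: Hb5.
- have [Ha1 Ha2 Ha3 Ha4 Ha5] := hA _ Ha.
  have := (H1 _ (leqnn s)).2 (@ball_same2 _ s va _ (Some tt) _ ltac:(by rewrite /colv Hb)).
  move=> /(ball_Q Ha) [E|E]; first by simpl in *; lia.
  by case: Ha5.
- have [Ha1 Ha2 Ha3 Ha4 Ha5] := hA _ Ha.
  have [Hb1 Hb2 Hb3 Hb4 Hb5] := hA _ Hb.
  have := (H1 0 (leq0n _)).2 (ball_LC s Hb).
  move=> /(ball_Q Ha); simpl in *; lia.
- simpl in *; lia.
- have [Hb1 Hb2 Hb3 Hb4 Hb5] := hA _ Hb.
  have := (H1 _ (leqnn s)).1 (@ball_same2 _ s ua _ (Some tt) _ ltac:(by rewrite /colv Ha)).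
  move=> /(ball_Q Hb) [E|E]; first by simpl in *; lia.
  by case: Hb5.
- have [Ha1 Ha2 Ha3 Ha4 Ha5] := hA _ Ha.
  have := (H1 _ Ha3).1 (@ball_same2 _ s ua _ (Some tt) _ ltac:(by rewrite /colv (negbTE Ha))).
  move=> /(ball_P Hb) [E|E]; first by simpl in *; lia.
  by case: Ha5.
- have [Ha1 Ha2 Ha3 Ha4 Ha5] := hA _ Ha.
  have [Hb1 Hb2 Hb3 Hb4 Hb5] := hA _ Hb.
  have := (H1 0 (leq0n _)).1 (ball_LC s Ha).
  move=> /(ball_Q Hb); simpl in *; lia.
- by congr pair; apply: val_inj; rewrite Ha Hb.
- have [Hb1 Hb2 Hb3 Hb4 Hb5] := hA _ Hb; simpl in *; lia.
- have [Ha1 Ha2 Ha3 Ha4 Ha5] := hA _ Ha; simpl in *; lia.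
- have [Ha1 Ha2 Ha3 Ha4 Ha5] := hA _ Ha.
  have [Hb1 Hb2 Hb3 Hb4 Hb5] := hA _ Hb.
  have E1 := (H1 _ Ha3).1 (@ball_same2 _ s ua _ (Some tt) _ ltac:(by rewrite /colv (negbTE Ha))).
  have E2 := (H1 _ Hb3).2 (@ball_same2 _ s va _ (Some tt) _ ltac:(by rewrite /colv (negbTE Hb))).
  move: E1 E2 => /(ball_L Hb) E1 /(ball_L Ha) E2.
  have Eb : bcol s (val ua) = bcol s (val va) by simpl in *; lia.
  by rewrite (inj _ _ Ha Hb Hc Eb).
Qed.

Definition cc n s (y : 'I_n * option unit) : 'I_s.+1 := inord (colv s (val y.1) y.2).

Lemma colv_le n s (y : 'I_n * option unit) : n <= s * s -> 0 < s ->
  colv s (val y.1) y.2 <= s.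
Proof.
case: y => ya yo Hn s0; rewrite /colv /=.
case: ifP => Ha; first by case: yo.
have Hy : 0 < val ya < n by rewrite ltn_ord andbT; move/negbT: Ha; simpl in *; lia.
case: yo => [_|]; [exact: bcol_le | exact: acol_le Hy Hn].
Qed.

Lemma cc_val n s y : n <= s * s -> 0 < s -> val (@cc n s y) = colv s (val y.1) y.2.
Proof. by move=> Hn s0; rewrite /cc /= inordK // ltnS colv_le. Qed.

Lemma ballm_iff n s (u : 'I_n * option unit) j m : 2 < n -> n <= s * s -> 0 < s ->
  m <= 1 -> j <= s ->
  ((exists y : 'I_n * option unit, colv s (val y.1) y.2 = j /\ DD u y <= m) <->
   dist_set (@star_corona_K1 n) u (color_class (@cc n s) (inord j)) <= m).
Proof.
move=> Hn Hns s0 Hm Hj; rewrite dist_setE //.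
have -> : (n * 2 <= m) = false by apply/negbTE; lia.
split.
  move=> [y [Hy Hd]]; apply/existsP; exists y; rewrite Hd andbT inE.
  by apply/eqP; apply: val_inj; rewrite cc_val //= inordK // ltnS.
move/existsP => [y /andP [Hy Hd]]; exists y; split => //.
move: Hy; rewrite inE => /eqP/(f_equal val); rewrite cc_val //= inordK // ltnS.
Qed.

Lemma cc_proper n s : n <= s * s -> 2 <= s -> proper_coloring (@star_corona_K1 n) (@cc n s).
Proof.
move=> Hns Hs [ua uo] [va vo]; rewrite edgeE => He.
apply/negP => /eqP /(f_equal val); rewrite !cc_val //=; last lia; last lia.
have Fa := bcol_neq s (val ua); have Fb := bcol_neq s (val va).
have Ga := acol_ge1 s (val ua); have Gb := acol_ge1 s (val va).
rewrite /colv.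
case: uo vo He => [[]|] [[]|] //= He.
- move/eqP: He => He; rewrite He.
  case: ifP => H0 /=; first lia.
  move: Fb; simpl in *; lia.
- move/eqP: He => He; rewrite He.
  case: ifP => H0 /=; first lia.
  move: Fb; simpl in *; lia.
- case: ifP => Ha; case: ifP => Hb; simpl in *; lia.
Qed.

Theorem theorem8 (n s : nat) :
  4 <= n -> (s.-1) ^ 2 < n <= s ^ 2 ->
  is_locating_chromatic_number (@star_corona_K1 n) s.+1.
Proof.
move=> Hn /andP [H1 H2].
have Hns : n <= s * s by rewrite mulnn.
have Hs2 : 2 <= s by nia.
have Hn2 : 2 < n by lia.
have s0 : 0 < s by lia.
split.
- exists (@cc n s); split; first exact: cc_proper.
  move=> u v Hcode.
  have Hc : forall j m, m <= 1 -> j <= s ->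
      ((exists y : 'I_n * option unit, colv s (val y.1) y.2 = j /\ DD u y <= m) <->
       (exists y : 'I_n * option unit, colv s (val y.1) y.2 = j /\ DD v y <= m)).
    move=> j m Hm Hj.
    rewrite (ballm_iff u) // (ballm_iff v) //.
    by have := Hcode (inord j); rewrite /color_code => ->.
  apply: (key Hns Hs2).
    have Hu := colv_le u Hns s0.
    have Hu0 : DD u u <= 0 by rewrite leqn0 DD0.
    have [y [Hy Hd]] := (Hc _ 0 (leq0n _) Hu).1 (ex_intro _ u (conj erefl Hu0)).
    have : DD v y == 0 by rewrite -leqn0.
    by rewrite DD0 => /eqP E; rewrite E Hy.
  move=> j Hj; exact: Hc.
- move=> k c Hloc.
  have := lower (leq_trans (isT : 3 < 4) Hn) Hloc.
  move: H1; rewrite -mulnn => H1 Hk.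
  case: (leqP s.+1 k) => // Hks.
  have : k.-1 <= s.-1 by lia.
  move=> Hle; have := leq_mul Hle Hle; lia.
Qed.
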